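(* Let $v=4\lambda+3$ be a prime, let $p$ be any prime divisor of $\lambda+1$, and let $t=\mathrm{ord}_v(p)$. Then the Paley design $\mathrm{Paley}(v)$ is additive under $\mathbb{Z}_p^t$.
   Context: For a prime $v=4\lambda+3$, the set of nonzero squares of $\mathbb{F}_v$ is a $(4\lambda+3,2\lambda+1,\lambda)$ difference set in $\mathbb{Z}_v$; $\mathrm{Paley}(v)$ is the associated symmetric design with point set $\mathbb{Z}_v$ and blocks all translates $\{s+i : s \text{ a nonzero square}\}$, $i\in\mathbb{Z}_v$. $\mathrm{ord}_v(p)$ is the multiplicative order of $p$ modulo $v$. A design $(V,\mathscr B)$ is additive under an abelian group $G$ if there is an injective map $f:V\to G$ such that $\sum_{x\in B}f(x)=0$ for every block $B\in\mathscr B$. *)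

(* Defs.v *)
From HB Require Import structures.
From mathcomp Require Import all_boot all_order all_algebra all_fingroup.
Set Implicit Arguments. Unset Strict Implicit. Unset Printing Implicit Defensive.
Import GRing.Theory.
Local Open Scope ring_scope.

Definition is_mult_order (v p t : nat) : Prop :=
  (0 < t)%N /\ (p ^ t = 1 %[mod v])%N /\
  (forall k : nat, (0 < k)%N -> (k < t)%N -> (p ^ k != 1 %[mod v])%N).

Definition nz_squares (v : nat) : {set 'F_v} :=
  [set x : 'F_v | (x != 0) && [exists y : 'F_v, y ^+ 2 == x]].

Definition paley_blocks (v : nat) : {set {set 'F_v}} :=
  [set [set s + i | s in nz_squares v] | i : 'F_v].

Definition additive_under (V : finType) (G : zmodType) (Bs : {set {set V}}) : Prop :=
  exists f : V -> G, injective f /\ forall B, B \in Bs -> \sum_(x in B) f x = 0.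

(* Main.v *)
Require Import Defs.
From mathcomp Require Import all_boot all_order all_algebra all_fingroup all_solvable all_field.
From mathcomp Require Import zify.
Set Implicit Arguments. Unset Strict Implicit. Unset Printing Implicit Defensive.
Import GRing.Theory FinRing.Theory.
Local Open Scope ring_scope.

Definition issq v (x : 'F_v) := [exists y : 'F_v, y ^+ 2 == x].
Definition nsq v : {set 'F_v} := [set x : 'F_v | (x != 0) && ~~ issq x].

Lemma valFD v (x y : 'F_v) : prime v -> val (x + y) = ((val x + val y) %% v)%N.
Proof. by move=> pv /=; congr (_ %% _)%N; apply: Fp_cast. Qed.

Lemma valFM v (x y : 'F_v) : prime v -> val (x * y) = ((val x * val y) %% v)%N.
Proof. by move=> pv /=; congr (_ %% _)%N; apply: Fp_cast. Qed.

Lemma valF_lt v (x : 'F_v) : prime v -> (val x < v)%N.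
Proof. by move=> pv; apply: leq_trans (ltn_ord x) _; rewrite Fp_cast. Qed.

Lemma m1_notsq v lam : prime v -> v = (4 * lam + 3)%N -> ~~ issq (-1 : 'F_v).
Proof.
move=> pv hv; apply/existsP => -[y /eqP hy].
have y0 : y != 0 by apply: contra_eq_neq hy => ->; rewrite expr0n /= eq_sym oppr_eq0 oner_eq0.
have e : v = (4 * lam + 2).+1 by lia.
have := expf_card y; rewrite card_Fp // [X in _ ^+ X = _]e exprS.
rewrite -[X in _ = X]mulr1 => /(mulfI y0).
have e2 : (4 * lam + 2 = 2 * (2 * lam + 1))%N by lia.
rewrite e2 exprM hy addn1 exprS exprM sqrrN expr1n expr1n mulr1.
move=> /eqP; rewrite eq_sym -subr_eq0 opprK -[1 + 1]/(2%:R) -(dvdn_pcharf (pchar_Fp pv)).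
move=> /(dvdn_leq (isT : (0 < 2)%N)); lia.
Qed.

Lemma issqM v (x y : 'F_v) : issq x -> issq y -> issq (x * y).
Proof.
by move=> /existsP[a /eqP <-] /existsP[b /eqP <-]; apply/existsP; exists (a * b); rewrite exprMn.
Qed.

Lemma issqV v (x : 'F_v) : issq x -> issq x^-1.
Proof.
by move=> /existsP[a /eqP <-]; apply/existsP; exists a^-1; rewrite exprVn.
Qed.

Lemma inQ v (x : 'F_v) : (x \in nz_squares v) = (x != 0) && issq x.
Proof. by rewrite inE. Qed.

Lemma inN v (x : 'F_v) : (x \in nsq v) = (x != 0) && ~~ issq x.
Proof. by rewrite inE. Qed.

Lemma QN_N v (x n : 'F_v) : x \in nz_squares v -> n \in nsq v -> x * n \in nsq v.
Proof.
rewrite inQ inN => /andP[x0 sx] /andP[n0 sn]; rewrite inN mulf_neq0 //=.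
apply: contra sn => sxn; have -> : n = x^-1 * (x * n) by rewrite mulKf.
by apply: issqM => //; apply: issqV.
Qed.

Lemma negQ v lam (q : 'F_v) : prime v -> v = (4 * lam + 3)%N ->
  q \in nz_squares v -> - q \in nsq v.
Proof.
move=> pv hv; rewrite inQ inN oppr_eq0 => /andP[q0 sq]; rewrite q0 /=.
apply: contra (m1_notsq pv hv) => snq.
have -> : -1 = (- q) * q^-1 by rewrite mulNr divff.
by apply: issqM => //; apply: issqV.
Qed.

Lemma valF0 v (x : 'F_v) : (val x == 0%N) = (x == 0).
Proof. by []. Qed.

Lemma cardQ_ge v lam : prime v -> v = (4 * lam + 3)%N ->
  (2 * lam + 1 <= #|nz_squares v|)%N.
Proof.
move=> pv hv.
pose g (x : 'F_v) := (x ^+ 2, (val x <= 2 * lam + 1)%N).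
have ginj : injective g.
  move=> x y e; have hb := congr1 snd e; move: (congr1 fst e) => /= /eqP.
  rewrite eqf_sqr => /orP[/eqP //|/eqP xy]; move: hb => /= hb.
  have [y0'|y0] := eqVneq y 0; first by rewrite xy y0' oppr0.
  have x0 : x != 0 by rewrite xy oppr_eq0.
  have : val (x + y) = 0%N by rewrite xy addNr.
  rewrite valFD // => hm.
  have ltx := valF_lt x pv; have lty := valF_lt y pv.
  have px : (0 < val x)%N by rewrite lt0n valF0.
  have py : (0 < val y)%N by rewrite lt0n valF0.
  have es : (val x + val y = v)%N.
    have hd : (v %| val x + val y)%N by apply/eqP.
    have := divnK hd.
    case: (_ %/ _)%N => [|[|k]] /=; rewrite ?mul0n ?mul1n; simpl in *; nia.
  move: hb; simpl in *; case: leqP; case: leqP => //; lia.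
have := card_imset [set: 'F_v] ginj.
have sub : g @: [set: 'F_v] \subset (0, true) |: setX (nz_squares v) [set: bool].
  apply/subsetP => _ /imsetP[x _ ->]; rewrite !inE /g.
  have [->|x0] := eqVneq x 0; first by apply/orP; left; rewrite xpair_eqE expr0n eqxx.
  apply/orP; right; rewrite /= sqrf_eq0 x0 andbT /=.
  by apply/existsP; exists x.
have := subset_leq_card sub; rewrite cardsU1 cardsX !cardsT card_bool card_Fp //.
move=> h1 h2; rewrite h2 in h1; move: h1; set b := (_ \notin _); have := leq_b1 b.
move: b => b. move: (#|nz_squares v|) => c. lia.
Qed.

Lemma cardQN v lam : prime v -> v = (4 * lam + 3)%N ->
  #|nz_squares v| = (2 * lam + 1)%N /\ #|nsq v| = (2 * lam + 1)%N.
Proof.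
move=> pv hv.
have hs := cardsID [set x : 'F_v | issq x] [set~ (0 : 'F_v)].
have eQ : [set~ (0 : 'F_v)] :&: [set x : 'F_v | issq x] = nz_squares v.
  by apply/setP => x; rewrite !inE.
have eN : [set~ (0 : 'F_v)] :\: [set x : 'F_v | issq x] = nsq v.
  by apply/setP => x; rewrite !inE andbC.
rewrite eQ eN cardsC1 card_Fp // in hs.
have hle : (#|nz_squares v| <= #|nsq v|)%N.
  rewrite -(card_imset (nz_squares v) (@oppr_inj 'F_v)); apply: subset_leq_card.
  by apply/subsetP => _ /imsetP[q hq ->]; exact: negQ pv hv hq.
have := cardQ_ge pv hv; move: hs hle.
move: (#|nz_squares v|) (#|nsq v|) => a b; lia.
Qed.

Lemma NN_Q v lam (n m : 'F_v) : prime v -> v = (4 * lam + 3)%N ->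
  n \in nsq v -> m \in nsq v -> n * m \in nz_squares v.
Proof.
move=> pv hv hn hm.
have [cQ cN] := cardQN pv hv.
have n0 : n != 0 by move: hn; rewrite inN => /andP[].
have : m \in (fun q => n * q) @: nz_squares v.
  have hsub : (fun q => n * q) @: nz_squares v \subset nsq v.
    by apply/subsetP => _ /imsetP[q hq ->]; rewrite mulrC; apply: QN_N.
  have -> // : (fun q => n * q) @: nz_squares v = nsq v.
  apply/eqP; rewrite eqEcard hsub /= card_imset; last exact: mulfI.
  by rewrite cQ cN.
case/imsetP => q hq ->; rewrite mulrA; move: hq; rewrite !inQ => /andP[q0 sq].
rewrite !mulf_neq0 //=; apply: issqM => //; apply/existsP; exists n; by rewrite expr2.
Qed.

Lemma imset_eq_card (T : finType) (f : T -> T) (A B : {set T}) :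
  injective f -> {in A, forall x, f x \in B} -> #|A| = #|B| -> f @: A = B.
Proof.
move=> finj hAB hc; apply/eqP; rewrite eqEcard card_imset // hc leqnn andbT.
by apply/subsetP => _ /imsetP[x hx ->]; apply: hAB.
Qed.

Lemma m1N v lam : prime v -> v = (4 * lam + 3)%N -> (-1 : 'F_v) \in nsq v.
Proof. by move=> pv hv; rewrite inN oppr_eq0 oner_eq0 (m1_notsq pv hv). Qed.

Lemma NV v (n : 'F_v) : n \in nsq v -> n^-1 \in nsq v.
Proof.
rewrite !inN invr_eq0 => /andP[-> sn] /=; apply: contra sn => /issqV.
by rewrite invrK.
Qed.

Definition Ez (F : fieldType) v (z : F) (a : 'F_v) := z ^+ val a.

Lemma EzD (F : fieldType) v (z : F) (a b : 'F_v) : prime v -> z ^+ v = 1 ->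
  Ez z (a + b) = Ez z a * Ez z b.
Proof. by move=> pv hz; rewrite /Ez valFD // expr_mod // exprD. Qed.

Lemma Ez0 (F : fieldType) v (z : F) : Ez z (0 : 'F_v) = 1.
Proof. by []. Qed.

Lemma Ez_sum (F : fieldType) v (z : F) : prime v -> z ^+ v = 1 -> z != 1 ->
  \sum_(a : 'F_v) Ez z a = 0.
Proof.
move=> pv hz z1.
have -> : \sum_(a : 'F_v) Ez z a = \sum_(i < (Zp_trunc (pdiv v)).+2) z ^+ i by [].
rewrite -(big_mkord xpredT (fun i => z ^+ i)) Fp_cast // big_mkord.
have : (z - 1) * \sum_(i < v) z ^+ i = 0 by rewrite -subrX1 hz subrr.
by move/eqP; rewrite mulf_eq0 subr_eq0 (negPf z1) /= => /eqP.
Qed.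

Definition eta (F : fieldType) v (z : F) := \sum_(s in nz_squares v) Ez z s.
Definition etaN (F : fieldType) v (z : F) := \sum_(s in nsq v) Ez z s.

Lemma eta_sum (F : fieldType) v (z : F) : prime v -> z ^+ v = 1 -> z != 1 ->
  eta v z + etaN v z = -1.
Proof.
move=> pv hz z1; have := Ez_sum pv hz z1.
rewrite (bigD1 0) //= Ez0 (bigID (fun a => issq a)) /= => /eqP.
rewrite addrC addr_eq0 => /eqP <-; congr (_ + _); apply: eq_bigl => a.
  by rewrite inQ.
by rewrite inN.
Qed.

Lemma S_val (F : fieldType) v lam (z : F) (c : 'F_v) : prime v -> v = (4 * lam + 3)%N ->
  \sum_(a in nz_squares v) Ez z (a * c) =
  if c == 0 then (#|nz_squares v|)%:R else if issq c then eta v z else etaN v z.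
Proof.
move=> pv hv; have [cQ cN] := cardQN pv hv.
have [->|c0] := eqVneq c 0.
  by under eq_bigr => a _ do rewrite mulr0 Ez0; rewrite sumr_const.
have finj : injective (fun a : 'F_v => a * c) by exact: mulIf.
case: ifP => sc.
  rewrite /eta -{2}(imset_eq_card finj (A := nz_squares v) (B := nz_squares v)) ?big_imset //.
  - by move=> x y _ _; apply: finj.
  - by move=> a; rewrite !inQ mulf_eq0 (negPf c0) orbF => /andP[-> sa] /=; apply: issqM.
rewrite /etaN -(imset_eq_card finj (A := nz_squares v) (B := nsq v)) ?big_imset //.
- by move=> x y _ _; apply: finj.
- by move=> a ha; apply: QN_N => //; rewrite inN c0 sc.
- by rewrite cQ cN.
Qed.

Definition SA v : {set 'F_v} := (nsq v :\ -1) :&: [set u | issq (1 + u)].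
Definition SB v : {set 'F_v} := (nsq v :\ -1) :\: [set u | issq (1 + u)].

Lemma inSA v (u : 'F_v) : (u \in SA v) = [&& u \in nsq v, u != -1 & issq (1 + u)].
Proof. by rewrite /SA in_setI in_setD1; case: (u != -1); case: (u \in nsq v); rewrite //= inE. Qed.

Lemma inSB v (u : 'F_v) : (u \in SB v) = [&& u \in nsq v, u != -1 & ~~ issq (1 + u)].
Proof. by rewrite /SB in_setD in_setD1; case: (u != -1); case: (u \in nsq v); rewrite //= ?andbF ?andbT // inE. Qed.

Lemma SAB_map v lam (u : 'F_v) : prime v -> v = (4 * lam + 3)%N ->
  ((u \in SA v) = (u^-1 \in SB v)) /\ ((u \in SB v) = (u^-1 \in SA v)).
Proof.
move=> pv hv.
have key : forall w : 'F_v, w \in nsq v -> w != -1 ->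
    (w^-1 \in nsq v) && (w^-1 != -1) /\ (issq (1 + w^-1) = ~~ issq (1 + w)).
  move=> w hw w1; have w0 : w != 0 by move: hw; rewrite inN => /andP[].
  split.
    rewrite (NV hw) /=; apply/negP => /eqP h; move/negP: w1; apply.
    by rewrite -[w]invrK h invrN1.
  have e : 1 + w^-1 = (1 + w) * w^-1 by rewrite mulrDl mul1r divff // addrC.
  have w10 : 1 + w != 0 by rewrite addrC addr_eq0.
  case s1 : (issq (1 + w)).
    have : (1 + w) * w^-1 \in nsq v by apply: QN_N; rewrite ?inQ ?w10 ?NV.
    by rewrite -e inN => /andP[_ /negPf].
  have : (1 + w) * w^-1 \in nz_squares v by apply: (NN_Q pv hv); [rewrite inN w10 s1 | exact: NV].
  by rewrite -e inQ => /andP[].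
have [hu|hu] := boolP ((u \in nsq v) && (u != -1)).
  move: hu => /andP[hu u1]; have [/andP[h1 h2] h3] := key u hu u1.
  by rewrite !inSA !inSB hu u1 h1 h2 h3 /=; case: (issq (1 + u)).
have hu' : ~~ ((u^-1 \in nsq v) && (u^-1 != -1)).
  apply: contra hu => /andP[hu u1]; have [/andP[h1 h2] _] := key _ hu u1.
  by rewrite invrK in h1 h2; rewrite h1 h2.
move: hu hu'; rewrite !inSA !inSB.
by case: (u \in nsq v); case: (u != -1); case: (u^-1 \in nsq v); case: (u^-1 != -1).
Qed.

Lemma cardSAB v lam : prime v -> v = (4 * lam + 3)%N ->
  #|SA v| = lam /\ #|SB v| = lam.
Proof.
move=> pv hv; have [_ cN] := cardQN pv hv.
have h := cardsID [set u : 'F_v | issq (1 + u)] (nsq v :\ -1).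
rewrite -/(SA v) -/(SB v) in h.
have := cardsD1 (-1) (nsq v); rewrite (m1N pv hv) cN => h2.
have le1 : (#|SA v| <= #|SB v|)%N.
  rewrite -(card_imset (SA v) (@invr_inj 'F_v)); apply: subset_leq_card.
  apply/subsetP => _ /imsetP[u hu ->].
  by have [h3 _] := SAB_map u pv hv; rewrite -h3.
have le2 : (#|SB v| <= #|SA v|)%N.
  rewrite -(card_imset (SB v) (@invr_inj 'F_v)); apply: subset_leq_card.
  apply/subsetP => _ /imsetP[u hu ->].
  by have [_ h3] := SAB_map u pv hv; rewrite -h3.
move: h h2 le1 le2; move: #|SA v| #|SB v| #|nsq v :\ -1| => a b c; lia.
Qed.

Lemma eta_prod (F : fieldType) v lam (z : F) : prime v -> v = (4 * lam + 3)%N ->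
  z ^+ v = 1 -> z != 1 -> eta v z * etaN v z = (lam.+1)%:R.
Proof.
move=> pv hv hz z1.
have [cQ cN] := cardQN pv hv; have [cA cB] := cardSAB pv hv.
have step1 : eta v z * etaN v z =
    \sum_(u in nsq v) \sum_(a in nz_squares v) Ez z (a * (1 + u)).
  rewrite /eta /etaN mulr_suml.
  transitivity (\sum_(a in nz_squares v) \sum_(u in nsq v) Ez z (a * (1 + u))).
    apply: eq_bigr => a ha; rewrite mulr_sumr.
    have a0 : a != 0 by move: ha; rewrite inQ => /andP[].
    rewrite -{1}(imset_eq_card (mulfI a0) (A := nsq v) (B := nsq v)) ?big_imset //.
    - by apply: eq_bigr => u _; rewrite -EzD // mulrDr mulr1.
    - by move=> x y _ _; apply: (mulfI a0).
    - by move=> u hu; apply: QN_N.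
  exact: exchange_big.
rewrite step1 (big_setD1 (-1) (m1N pv hv)) (S_val z (1 + -1) pv hv) subrr eqxx.
under eq_bigr => u _ do rewrite (S_val z (1 + u) pv hv).
rewrite (big_setID (A := nsq v :\ -1) [set u | issq (1 + u)]) -/(SA v) -/(SB v).
rewrite (eq_bigr (fun _ => eta v z)); last first.
  move=> u; rewrite inSA => /and3P[_ u1 s].
  have -> : (1 + u == 0) = false by apply/negbTE; rewrite addrC addr_eq0.
  by rewrite s.
rewrite sumr_const (eq_bigr (fun _ => etaN v z)); last first.
  move=> u; rewrite inSB => /and3P[_ u1 s].
  have -> : (1 + u == 0) = false by apply/negbTE; rewrite addrC addr_eq0.
  by rewrite (negPf s).
rewrite !sumr_const cA cB.
change (#|nz_squares v|%:R + (eta v z *+ lam + etaN v z *+ lam) = lam.+1%:R :> F).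
rewrite -mulrnDl eta_sum // mulNrn cQ.
rewrite -natrB; last by lia.
congr (_%:R); lia.
Qed.

Lemma etaN_inv (F : fieldType) v lam (z : F) : prime v -> v = (4 * lam + 3)%N ->
  z ^+ v = 1 -> etaN v z = eta v z^-1.
Proof.
move=> pv hv hz; have [cQ cN] := cardQN pv hv.
have z0 : z != 0.
  have v0 : (v == 0%N) = false by apply/negbTE; rewrite hv addn3.
  by apply/eqP => z00; move: hz; rewrite z00 expr0n v0 => /eqP; rewrite eq_sym oner_eq0.
rewrite /etaN /eta.
rewrite -(imset_eq_card (@oppr_inj 'F_v) (A := nz_squares v) (B := nsq v)) ?big_imset //.
- apply: eq_bigr => s _; rewrite /Ez exprVn.
  have h : Ez z (- s) * Ez z s = 1 by rewrite -EzD // addNr.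
  by rewrite -[LHS]mulr1 -(mulfV (expf_neq0 (val s) z0)) mulrA h mul1r.
- by move=> x y _ _; apply: oppr_inj.
- by move=> s hs; apply: (negQ pv hv).
- by rewrite cQ cN.
Qed.

Lemma add_iso (F : finFieldType) (p t : nat) : prime p -> p \in [pchar F] ->
  #|F| = (p ^ t)%N ->
  exists phi : F -> 'rV['Z_p]_t, injective phi /\ {morph phi : x y / x + y}.
Proof.
move=> pp pF cF.
have pZ : p \in [pchar 'Z_p].
  by apply/andP; split => //; apply/eqP; apply: pchar_Zp; apply: prime_gt1.
have /isog_isom/=[f /isomP[injf im_f]]: [set: F] \isog [set: 'rV['Z_p]_t].
  rewrite (isog_abelem_card _ (fin_ring_pchar_abelem pF)).
  rewrite (fin_lmod_pchar_abelem _ pZ) /= !cardsT card_mx mul1n card_ord Zp_cast ?prime_gt1 // cF.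
  by [].
exists f; split.
  by move=> x y; apply: (injmP injf); rewrite inE.
by move=> x y; rewrite -zmodMgE morphM ?inE.
Qed.

Theorem corollary3p4 (lambda v p t : nat) :
  prime v -> v = (4 * lambda + 3)%N ->
  prime p -> (p %| lambda.+1)%N ->
  is_mult_order v p t ->
  additive_under ('rV['Z_p]_t) (paley_blocks v).
Proof.
move=> pv hv pp hpl [t0 [ht _]].
have [F pF cF] := pPrimePowerField pp t0.
have [phi [phiI phiD]] := add_iso pp pF cF.
have phi0 : phi 0 = 0.
  have h := phiD 0 0; rewrite addr0 in h.
  by apply: (@addrI _ (phi 0)); rewrite addr0 -h.
have hvd : (v %| #|[set: {unit F}]|)%N.
  rewrite card_finField_unit cF -subn1 -eqn_mod_dvd ?expn_gt0 ?prime_gt0 //.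
  by apply/eqP.
have [x _ ox] := Cauchy pv hvd.
have gen : forall y : {unit F}, #[y]%g = v ->
    val y ^+ v = 1 /\ val y != 1.
  move=> y oy; split; first by rewrite -val_unitX -oy expg_order.
  apply/negP => /eqP y1.
  have : y = 1%g by apply: val_inj; rewrite y1.
  by move=> e; move: oy; rewrite e order1 => hv1; move: pv; rewrite -hv1.
have [y [oy ey]] : exists y : {unit F}, #[y]%g = v /\ eta v (val y) = 0.
  have [hz z1] := gen x ox.
  have := eta_prod pv hv hz z1.
  have -> : (lambda.+1)%:R = 0 :> F by apply/eqP; rewrite -(dvdn_pcharf pF).
  move/eqP; rewrite mulf_eq0 => /orP[/eqP h|/eqP h].
    by exists x.
  exists (x^-1)%g; split; first by rewrite orderV.
  by rewrite val_unitV -(etaN_inv pv hv hz).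
have [hw w1] := gen y oy.
exists (fun a : 'F_v => phi (val y ^+ val a)); split.
  move=> a b /phiI; rewrite -!val_unitX => /val_inj /eqP.
  rewrite eq_expg_mod_order oy !modn_small ?valF_lt // => /eqP h.
  exact: val_inj.
move=> B /imsetP[i _ ->].
rewrite big_imset /=; last by move=> a b _ _; apply: addIr.
under eq_bigr => s _ do rewrite -/(Ez (val y) (s + i)) (EzD _ _ pv hw).
rewrite -(big_morph phi phiD phi0) -mulr_suml.
by rewrite -/(eta v (val y)) ey mul0r phi0.
Qed.
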